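(* Let $\mathcal{H}$ be a $k$-conformal hypergraph on vertex set $V$ (with $k\le|V|$). If $E\in\mathrm{ext}_k(\mathcal{H})$, then there exists $F\in\mathcal{H}$ with $E\subseteq F$.
   Context: $\mathcal{H}$ is $k$-conformal if every inclusion-minimal subset of $V$ that is not contained in any hyperedge of $\mathcal{H}$ has size at most $k$. A $k$-trace on $V$ is a pair $(T,S)$ with $S\subseteq V$, $|S|=k$, $T\subseteq S$; $F$ realizes it if $F\cap S=T$. $\mathrm{traces}_k(\mathcal{H})$ is the set of $k$-traces realized by hyperedges of $\mathcal{H}$, and $\mathrm{ext}_k(\mathcal{H})$ is the hypergraph on $V$ of all $E\subseteq V$ such that every $k$-trace realized by $E$ lies in $\mathrm{traces}_k(\mathcal{H})$. *)

(* Defs.v *)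
From mathcomp Require Import all_boot.
Set Implicit Arguments.
Unset Strict Implicit.
Unset Printing Implicit Defensive.

Definition covered (V : finType) (H : {set {set V}}) (X : {set V}) : bool :=
  [exists F in H, X \subset F].

Definition conformal (V : finType) (k : nat) (H : {set {set V}}) : Prop :=
  forall X : {set V}, minset (fun Y => ~~ covered H Y) X -> #|X| <= k.

Definition is_ktrace (V : finType) (k : nat) (p : {set V} * {set V}) : bool :=
  (#|p.2| == k) && (p.1 \subset p.2).

Definition realizes (V : finType) (F : {set V}) (p : {set V} * {set V}) : bool :=
  F :&: p.2 == p.1.

Definition traces (V : finType) (k : nat) (H : {set {set V}})
  : {set {set V} * {set V}} :=
  [set p | is_ktrace k p & [exists F in H, realizes F p]].

Definition ext (V : finType) (k : nat) (H : {set {set V}}) : {set {set V}} :=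
  [set E | [forall p, (is_ktrace k p && realizes E p) ==> (p \in traces k H)]].

(* Main.v *)
Require Import Defs.
From mathcomp Require Import all_boot.

Lemma extend_set (V : finType) (X : {set V}) n :
  #|X| <= n -> n <= #|V| -> exists2 S : {set V}, X \subset S & #|S| = n.
Proof.
elim: n => [|n IH] hX hn.
  exists X => //; apply/eqP; by rewrite -leqn0.
case: (ltngtP #|X| n.+1) hX => // [lt _|eq _]; last by exists X.
have [S XS cS] := IH lt (ltnW hn).
have : ~~ (setT \subset S).
  apply/negP => /subset_leq_card; rewrite cardsT cS; move: hn.
  by rewrite ltnNge => /negP.
case/subsetPn => x _ xS.
exists (x |: S); first by apply: (subset_trans XS); apply: subsetUr.
by rewrite cardsU1 xS cS.
Qed.

Theorem proposition2 (V : finType) (k : nat) (H : {set {set V}}) (E : {set V}) :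
  k <= #|V| -> conformal k H -> E \in ext k H ->
  exists2 F, F \in H & E \subset F.
Proof.
move=> hk hc hE.
case: (boolP (covered H E)) => [/existsP [F /andP [FH EF]]|nc]; first by exists F.
exfalso.
have [X mX XE] := @minset_exists V (fun Y => ~~ covered H Y) E nc.
have Xk := hc X mX.
have [S XS cS] := @extend_set V X k Xk hk.
rewrite inE in hE.
have := forallP hE (E :&: S, S).
rewrite /is_ktrace /realizes /= cS eqxx subsetIr eqxx /= inE.
case/andP=> _ /existsP [F /andP [FH /eqP /= FS]].
have := minsetp mX; rewrite /covered => /negP; apply.
apply/existsP; exists F; rewrite FH /=.
have : X \subset E :&: S by rewrite subsetI XE XS.
by rewrite -FS subsetI => /andP [].
Qed.
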